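(* Let $\mathcal{A}$ be a fully probabilistic finite automaton, $\varphi \subseteq CRun(\mathcal{A})$ a predicate and $\mathcal{O}: CRun(\mathcal{A}) \to Obs$ a surjective observation function. Then: (1) $0 \leq \mathrm{PO}^A_\ell(\mathcal{A},\varphi,\mathcal{O}) \leq 1$ and $0 \leq \mathrm{PO}^S_\ell(\mathcal{A},\varphi,\mathcal{O}) \leq 1$. (2) $\mathrm{PO}^A_\ell(\mathcal{A},\varphi,\mathcal{O}) = 0$ if and only if $\varphi$ is opaque on $\mathit{unProb}(\mathcal{A})$ with respect to $\mathit{unProb}(\mathcal{O})$; and $\mathrm{PO}^S_\ell(\mathcal{A},\varphi,\mathcal{O}) = 0$ if and only if $\varphi$ is symmetrically opaque on $\mathit{unProb}(\mathcal{A})$ with respect to $\mathit{unProb}(\mathcal{O})$. (3) $\mathrm{PO}^A_\ell(\mathcal{A},\varphi,\mathcal{O}) = 1$ if and only if $\varphi = CRun(\mathcal{A})$; and $\mathrm{PO}^S_\ell(\mathcal{A},\varphi,\mathcal{O}) = 1$ if and only if $H(\mathbf{1}_{\varphi} \mid \mathcal{O}) = 0$.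
   Context: A fully probabilistic finite automaton (FPFA) is a tuple $\langle \Sigma, Q, \Delta, q_0\rangle$ with $\Sigma$ a finite alphabet, $Q$ a finite set of states, $q_0$ the initial state, and $\Delta: Q \to ((\Sigma\times Q)\uplus\{\mathrm{stop}\} \to [0,1])$ where $\mathrm{stop}$ is a special termination action, such that for each $q$, $\Delta(q)$ is a probability distribution and from every state there is a positive-probability path to a final state (a state $q$ with $\Delta(q)(\mathrm{stop})>0$). A run is a finite sequence $q_0 \xrightarrow{a_1} q_1 \cdots \xrightarrow{a_n} q_n$ with $\Delta(q_{i-1})(a_i,q_i)>0$; a complete run is $\rho\cdot\mathrm{stop}$ with $\Delta(q_n)(\mathrm{stop})>0$; $CRun(\mathcal{A})$ is the set of complete runs from $q_0$. The probability of a complete run is defined by $\mathbf{P}(q\,\mathrm{stop}) = \Delta(q)(\mathrm{stop})$ and $\mathbf{P}(q\xrightarrow{a}\rho) = \Delta(q)(a,r)\cdot\mathbf{P}(\rho)$ with $r$ the first state of $\rho$; this is a distribution on $CRun(\mathcal{A})$. $\mathbf{1}_\varphi$ and $\mathcal{O}$ are viewed as random variables on $CRun(\mathcal{A})$. Liberal probabilistic opacity: $\mathrm{PO}^A_\ell(\mathcal{A},\varphi,\mathcal{O}) = \sum_{o\in Obs,\ \mathcal{O}^{-1}(o)\subseteq\varphi} \mathbf{P}(\mathcal{O}=o)$; liberal probabilistic symmetrical opacity: $\mathrm{PO}^S_\ell(\mathcal{A},\varphi,\mathcal{O}) = \mathrm{PO}^A_\ell(\mathcal{A},\varphi,\mathcal{O})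 + \mathrm{PO}^A_\ell(\mathcal{A},\overline\varphi,\mathcal{O})$. $\mathit{unProb}(\mathcal{A})$ is the nondeterministic finite automaton with transitions $\{(q,a,r) : \Delta(q)(a,r)>0\}$, initial state $q_0$, and final states $\{q : \Delta(q)(\mathrm{stop})>0\}$; $\mathit{unProb}(\mathcal{O})(q_0\xrightarrow{a_1}\cdots q_n) = \mathcal{O}(q_0\xrightarrow{a_1}\cdots q_n\,\mathrm{stop})$. A predicate $\varphi$ is opaque for $\mathcal{O}$ if for every $o\in Obs$, $\mathcal{O}^{-1}(o)\not\subseteq\varphi$; it is symmetrically opaque if moreover $\mathcal{O}^{-1}(o)\not\subseteq\overline\varphi$ for every $o$. $H(\cdot\mid\cdot)$ is conditional Shannon entropy (base-2 logarithm). *)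

(* Defs.v *)
From HB Require Import structures.
From mathcomp Require Import all_boot all_order all_algebra.
From mathcomp Require Import all_classical all_reals.
From mathcomp Require Import ereal esum exp.

Set Implicit Arguments.
Unset Strict Implicit.
Unset Printing Implicit Defensive.

Import Order.TTheory GRing.Theory Num.Theory.
Local Open Scope ring_scope.
Local Open Scope classical_set_scope.

Section FPFA.
Variables (R : realType) (Sigma Q : finType).

(* A run q0 -a1-> q1 ... -an-> qn is encoded by q0 (stored in the automaton)
   and the sequence [:: (a1,q1); ...; (an,qn)].  The complete run
   rho . stop is encoded by the same sequence (the terminating action stop is
   implicit).  Transition distributions: Delta q (Some (a,r)) = Delta(q)(a,r),
   Delta q None = Delta(q)(stop). *)
Definition run := seq (Sigma * Q).

Definition lastq (q : Q) (s : run) : Q := last q (map snd s).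

Fixpoint pos_path (Delta : Q -> option (Sigma * Q) -> R) (q : Q) (s : run) : bool :=
  match s with
  | [::] => true
  | (a, r) :: s' => (0 < Delta q (Some (a, r))) && pos_path Delta r s'
  end.

Definition is_final (Delta : Q -> option (Sigma * Q) -> R) (q : Q) : bool :=
  0 < Delta q None.

Record fpfa := FPFA {
  q0 : Q;
  Delta : Q -> option (Sigma * Q) -> R;
  Delta_ge0 : forall q x, 0 <= Delta q x;
  Delta_sum1 : forall q, \sum_(x : option (Sigma * Q)) Delta q x = 1;
  Delta_live : forall q, exists s : run, pos_path Delta q s && is_final Delta (lastq q s)
}.

Definition CRun (A : fpfa) : set run :=
  [set s | pos_path (Delta A) (q0 A) s && is_final (Delta A) (lastq (q0 A) s)].

Fixpoint prob_from (Delta : Q -> option (Sigma * Q) -> R) (q : Q) (s : run) : R :=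
  match s with
  | [::] => Delta q None
  | (a, r) :: s' => Delta q (Some (a, r)) * prob_from Delta r s'
  end.

Definition Prob (A : fpfa) (s : run) : R := prob_from (Delta A) (q0 A) s.

Definition PrS (A : fpfa) (S : set run) : \bar R :=
  \esum_(s in CRun A `&` S) (Prob A s)%:E.

Variable Obs : choiceType.

Definition PrObs (A : fpfa) (O : run -> Obs) (o : Obs) : \bar R :=
  PrS A [set s | O s = o].

Definition preim (A : fpfa) (O : run -> Obs) (o : Obs) : set run :=
  CRun A `&` [set s | O s = o].

Definition complC (A : fpfa) (phi : set run) : set run := CRun A `\` phi.

Definition POA (A : fpfa) (phi : set run) (O : run -> Obs) : \bar R :=
  \esum_(o in [set o | preim A O o `<=` phi]) PrObs A O o.

Definition POS (A : fpfa) (phi : set run) (O : run -> Obs) : \bar R :=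
  (POA A phi O + POA A (complC A phi) O)%E.

Record nfa := NFA {
  ninit : Q;
  ntrans : Q -> Sigma -> Q -> bool;
  nfinal : pred Q
}.

Fixpoint nfa_path (N : nfa) (q : Q) (s : run) : bool :=
  match s with
  | [::] => true
  | (a, r) :: s' => ntrans N q a r && nfa_path N r s'
  end.

Definition accRun (N : nfa) : set run :=
  [set s | nfa_path N (ninit N) s && nfinal N (lastq (ninit N) s)].

Definition unProb (A : fpfa) : nfa :=
  NFA (q0 A) (fun q a r => 0 < Delta A q (Some (a, r))) (fun q => 0 < Delta A q None).

(* unProb(O)(q0 -a1-> ... qn) = O(q0 -a1-> ... qn stop); with our encoding
   the run rho and the complete run rho.stop have the same representation. *)
Definition unProbObs (O : run -> Obs) : run -> Obs := fun s => O s.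

Definition opaque (N : nfa) (phi : set run) (O : run -> Obs) : Prop :=
  forall o : Obs, ~ (accRun N `&` [set s | O s = o] `<=` phi).

Definition sym_opaque (N : nfa) (phi : set run) (O : run -> Obs) : Prop :=
  opaque N phi O /\
  forall o : Obs, ~ (accRun N `&` [set s | O s = o] `<=` accRun N `\` phi).

Definition log2 (x : R) : R := ln x / ln 2.

Definition ind (phi : set run) (s : run) : bool := `[< phi s >].

Definition PrJoint (A : fpfa) (phi : set run) (O : run -> Obs) (b : bool) (o : Obs) : R :=
  fine (PrS A [set s | ind phi s = b /\ O s = o]).

Definition ent_term (p q : R) : R := if p == 0 then 0 else - (p * log2 (p / q)).

Definition condH (A : fpfa) (phi : set run) (O : run -> Obs) : \bar R :=
  \esum_(o in [set: Obs])
     (\sum_(b : bool) ent_term (PrJoint A phi O b o) (fine (PrObs A O o)))%:E.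

End FPFA.

(* Main.v *)
Require Import Defs.
From HB Require Import structures.
From mathcomp Require Import all_boot all_order all_algebra.
From mathcomp Require Import all_classical all_reals.
From mathcomp Require Import ereal esum exp.
From mathcomp Require Import sequences topology normedtype.
From mathcomp Require Import lra.

Import Order.TTheory GRing.Theory Num.Theory numFieldNormedType.Exports.
Local Open Scope ring_scope.
Local Open Scope classical_set_scope.

Set Implicit Arguments.
Unset Strict Implicit.
Unset Printing Implicit Defensive.

Lemma sum_option (R : realType) (T : finType) (F : option T -> R) :
  \sum_(x : option T) F x = F None + \sum_(x : T) F (Some x).
Proof.
have -> : index_enum (option T) = None :: [seq Some x | x <- index_enum T].
  by rewrite /index_enum !unlock /= /option_enum; rewrite unlock.
by rewrite big_cons big_map.
Qed.

Lemma geom_small (R : realType) (c e : R) : 0 <= c < 1 -> 0 < e -> exists n : nat, c ^+ n < e.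
Proof.
move=> /andP[c0 c1] e0.
have h : `|c| < 1 by rewrite ger0_norm.
have := cvgr0_norm_lt (fun n : nat => c ^+ n) (cvg_expr h) _ e0.
case=> N _ HN. exists N. have := HN N (leqnn N). rewrite /= ger0_norm //. exact: exprn_ge0.
Qed.

Section Core.
Variables (R : realType) (Sigma Q : finType) (A : fpfa R Sigma Q).
Local Notation D := (Delta A).
Local Notation run := (run Sigma Q).

Lemma D_ge0 q x : 0 <= D q x. Proof. exact: Delta_ge0. Qed.

Definition T (f : Q -> R) (q : Q) : R := \sum_(x : Sigma * Q) D q (Some x) * f x.2.

Lemma T_ext f g : (forall q, f q = g q) -> forall q, T f q = T g q.
Proof. by move=> fg q; apply: eq_bigr => x _; rewrite fg. Qed.

Lemma T_add f g q : T (fun r => f r + g r) q = T f q + T g q.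
Proof. by rewrite /T -big_split; apply: eq_bigr => x _; rewrite mulrDr. Qed.

Lemma T_scale c f q : T (fun r => c * f r) q = c * T f q.
Proof. by rewrite /T mulr_sumr; apply: eq_bigr => x _; rewrite mulrCA. Qed.

Lemma T_mono f g : (forall q, f q <= g q) -> forall q, T f q <= T g q.
Proof. by move=> fg q; apply: ler_sum => x _; rewrite ler_wpM2l ?D_ge0. Qed.

Lemma T_ge0 f : (forall q, 0 <= f q) -> forall q, 0 <= T f q.
Proof. by move=> f0 q; apply: sumr_ge0 => x _; rewrite mulr_ge0 ?D_ge0. Qed.

Lemma T1 q : D q None + T (fun _ => 1) q = 1.
Proof.
rewrite -[RHS](Delta_sum1 A q) sum_option; congr (_ + _).
by rewrite /T; apply: eq_bigr => x _ /=; rewrite mulr1.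
Qed.

Lemma it_ext k f g : (forall q, f q = g q) -> forall q, iter k T f q = iter k T g q.
Proof. elim: k => [|k IH] fg q /=; first exact: fg. by apply: T_ext => r; exact: IH. Qed.

Lemma it_add k f g q : iter k T (fun r => f r + g r) q = iter k T f q + iter k T g q.
Proof.
elim: k q => [|k IH] q //=.
by rewrite -T_add; apply: T_ext.
Qed.

Lemma it_scale k c f q : iter k T (fun r => c * f r) q = c * iter k T f q.
Proof.
elim: k q => [|k IH] q //=.
by rewrite -T_scale; apply: T_ext.
Qed.

Lemma it_mono k f g : (forall q, f q <= g q) -> forall q, iter k T f q <= iter k T g q.
Proof. elim: k => [|k IH] fg q /=; first exact: fg. by apply: T_mono => r; exact: IH. Qed.

Lemma it_ge0 k f : (forall q, 0 <= f q) -> forall q, 0 <= iter k T f q.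
Proof. elim: k => [|k IH] f0 q /=; first exact: f0. by apply: T_ge0 => r; exact: IH. Qed.

Definition e k q := iter k T (fun _ => 1) q.
Definition Dn q := D q None.

Lemma eS k q : e k q = iter k T Dn q + e k.+1 q.
Proof.
rewrite /e iterSr -it_add; apply: it_ext => r; by rewrite T1.
Qed.

Lemma e_ge0 k q : 0 <= e k q.
Proof. by apply: it_ge0. Qed.

Lemma itDn_ge0 k q : 0 <= iter k T Dn q.
Proof. by apply: it_ge0 => r; exact: D_ge0. Qed.

Lemma e_le1 k q : e k q <= 1.
Proof.
elim: k q => [|k IH] q //=.
apply: (le_trans (T_mono IH q)).
by rewrite -[X in _ <= X](T1 q) lerDr D_ge0.
Qed.

Lemma e_noninc k q : e k.+1 q <= e k q.
Proof. by rewrite (eS k q) lerDr itDn_ge0. Qed.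

Lemma e_antimono m n q : (m <= n)%N -> e n q <= e m q.
Proof.
move=> /subnK <-; elim: (n - m)%N => [|d IH] //.
by rewrite addSn; apply: le_trans (e_noninc _ _) IH.
Qed.

Fixpoint runs k : seq run :=
  if k is k'.+1 then [seq x :: s | x <- index_enum (Sigma * Q)%type, s <- runs k'] else [:: [::]].

Lemma mem_runs k s : (s \in runs k) = (size s == k).
Proof.
elim: k s => [|k IH] [|x s] //=.
  by apply/negbTE/allpairsP => -[p [_ _]].
rewrite eqSS -IH; apply/allpairsP/idP => [[[y t] [/= _ ht [hx hst]]]|hs]; first by rewrite hst.
by exists (x, s); split => //=; exact: mem_index_enum.
Qed.

Lemma uniq_runs k : uniq (runs k).
Proof.
elim: k => [|k IH] //=.
apply: allpairs_uniq_dep => //; first exact: index_enum_uniq.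
by move=> [x1 s1] [x2 s2] _ _ /= [-> ->].
Qed.

Lemma prob_cons q x s : prob_from D q (x :: s) = D q (Some x) * prob_from D x.2 s.
Proof. by case: x. Qed.

Lemma sum_runs k q : \sum_(s <- runs k) prob_from D q s = iter k T Dn q.
Proof.
elim: k q => [|k IH] q /=; first by rewrite big_cons big_nil addr0.
rewrite big_allpairs_dep /T; apply: eq_bigr => x _.
under eq_bigr do rewrite prob_cons.
by rewrite -mulr_sumr IH.
Qed.

Fixpoint allruns k : seq run :=
  if k is k'.+1 then allruns k' ++ runs k'.+1 else runs 0.

Lemma allrunsS k : allruns k.+1 = allruns k ++ runs k.+1.
Proof. by []. Qed.

Lemma mem_allruns k s : (s \in allruns k) = (size s <= k)%N.
Proof.
elim: k => [|k IH]; first by case: s.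
by rewrite allrunsS mem_cat IH mem_runs [in RHS]leq_eqVlt ltnS orbC.
Qed.

Lemma uniq_allruns k : uniq (allruns k).
Proof.
elim: k => [|k IH]; first exact: (uniq_runs 0).
rewrite allrunsS cat_uniq IH uniq_runs andbT.
apply/hasPn => s; rewrite mem_runs => /eqP hs /=.
by rewrite mem_allruns hs ltnn.
Qed.

Lemma sum_allruns k q : \sum_(s <- allruns k) prob_from D q s + e k.+1 q = 1.
Proof.
elim: k => [|k IH].
  by rewrite /= (sum_runs 0) -(eS 0).
by rewrite allrunsS big_cat sum_runs -addrA -eS.
Qed.

Lemma prob_ge0 q s : 0 <= prob_from D q s.
Proof.
elim: s q => [|[a r] s IH] q /=; first exact: D_ge0.
by rewrite mulr_ge0 ?D_ge0.
Qed.

Lemma lastq_cons (q : Q) (a : Sigma) (r : Q) (s : run) : lastq q ((a, r) :: s) = lastq r s.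
Proof. by []. Qed.

Lemma prob_pos q s : pos_path D q s && is_final D (lastq q s) -> 0 < prob_from D q s.
Proof.
elim: s q => [|[a r] s IH] q /=; first by rewrite /lastq /= /is_final.
by rewrite lastq_cons -andbA => /andP[h1 h2]; rewrite mulr_gt0 // IH.
Qed.

Lemma prob_zero q s : ~~ (pos_path D q s && is_final D (lastq q s)) -> prob_from D q s = 0.
Proof.
elim: s q => [|[a r] s IH] q /=.
  rewrite /lastq /= /is_final => h.
  by apply/eqP; rewrite eq_le D_ge0 andbT leNgt.
rewrite lastq_cons -andbA negb_and => /orP[h|h].
  suff -> : D q (Some (a, r)) = 0 by rewrite mul0r.
  by apply/eqP; rewrite eq_le D_ge0 andbT leNgt.
by rewrite IH ?mulr0.
Qed.

Lemma e_lt1_local q : exists k c, c < 1 /\ forall m, (k <= m)%N -> e m q <= c.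
Proof.
have [s hs] := Delta_live A q.
have hp := prob_pos hs.
exists (size s).+1, (1 - prob_from D q s); split; first by rewrite ltrBlDr ltrDl.
move=> m hm; apply: le_trans (e_antimono q hm) _.
have := eS (size s) q; rewrite -sum_runs (bigD1_seq s) ?uniq_runs ?mem_runs //.
move=> h; rewrite lerBrDl; apply: le_trans (e_le1 (size s) q); rewrite h -addrA lerD2l lerDr.
by apply: sumr_ge0 => *; apply: prob_ge0.
Qed.

Lemma e_lt1 : exists K c, 0 <= c < 1 /\ forall q, e K q <= c.
Proof.
suff [K [c [c1 h]]] : exists K c, c < 1 /\ forall q, q \in index_enum Q -> forall m, (K <= m)%N -> e m q <= c.
  exists K, c; split; last by move=> q; apply: h => //; exact: mem_index_enum.
  rewrite c1 andbT; apply: le_trans (e_ge0 K (q0 A)) _.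
  by apply: h => //; exact: mem_index_enum.
elim: (index_enum Q) => [|x s [K1 [c1 [c1lt h1]]]].
  by exists 0%N, 0; split.
have [k [c [clt hk]]] := e_lt1_local x.
exists (maxn K1 k), (Num.max c1 c); split; first by rewrite gt_max c1lt clt.
move=> q; rewrite inE => /orP[/eqP ->|qs] m hm.
  by rewrite le_max (hk m (leq_trans (leq_maxr K1 k) hm)) orbT.
by rewrite le_max (h1 q qs m (leq_trans (leq_maxl K1 k) hm)).
Qed.

Lemma e_geom K c : (forall q, e K q <= c) -> forall n q, e (n * K) q <= c ^+ n.
Proof.
move=> hK; elim=> [|n IH] q; first by rewrite mul0n expr0 e_le1.
rewrite mulSnr /e iterD.
have h1 : iter (n * K) T (iter K T (fun _ => 1)) q <= iter (n * K) T (fun r => c * 1) q.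
  by apply: it_mono => r; rewrite mulr1; exact: hK.
apply: le_trans h1 _.
rewrite it_scale exprSr [X in _ <= X]mulrC; apply: ler_wpM2l.
  by apply: le_trans (hK q); apply: e_ge0.
exact: IH.
Qed.

Lemma e_small eps : 0 < eps -> exists k, forall q, e k q < eps.
Proof.
move=> eps0; have [K [c [hc hK]]] := e_lt1.
have [n hn] := geom_small hc eps0.
by exists (n * K)%N => q; apply: le_lt_trans (e_geom hK n q) hn.
Qed.

End Core.

Section Core2.
Variables (R : realType) (Sigma Q : finType) (A : fpfa R Sigma Q).
Local Notation D := (Delta A).
Local Notation run := (run Sigma Q).
Local Notation allruns := (allruns Sigma Q).

Lemma Prob_ge0 s : 0 <= Prob A s.
Proof. exact: prob_ge0. Qed.

Lemma Prob_pos s : CRun A s -> 0 < Prob A s.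
Proof. exact: prob_pos. Qed.

Lemma Prob_zero s : ~ CRun A s -> Prob A s = 0.
Proof. by move=> h; apply: prob_zero; apply/negP. Qed.

Lemma PrSE (S : set run) : PrS A S = \esum_(s in S) (Prob A s)%:E.
Proof.
rewrite /PrS esum_mkcondl; apply: eq_esum => s _.
case: (boolP (s \in CRun A)) => // /negP hs.
by rewrite Prob_zero // => h; apply: hs; rewrite in_setE.
Qed.

Lemma total_le1 : (\esum_(s in [set: run]) (Prob A s)%:E <= 1)%E.
Proof.
apply: ge_ereal_sup => _ [X [finX _] <-].
have [t ->] := (finite_seqP X).1 finX.
set k := (\max_(u <- t) size u)%N.
have h1 : (\sum_(x \in [set` t]) (Prob A x)%:E <= \sum_(x \in [set` allruns k]) (Prob A x)%:E)%E.
  apply: lee_fsum_nneg_subset; [exact: finite_seq|exact: finite_seq| |].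
    move=> u; rewrite !inE /= => hu; rewrite mem_allruns.
    by rewrite /k; apply: (@leq_bigmax_seq _ t xpredT size u hu).
  by move=> u _; rewrite lee_fin Prob_ge0.
apply: le_trans h1 _.
rewrite -fsbig_seq ?uniq_allruns // sumEFin lee_fin.
have := sum_allruns A k (q0 A); have := e_ge0 A k.+1 (q0 A).
rewrite /Prob; lra.
Qed.

Lemma total_prob : \esum_(s in [set: run]) (Prob A s)%:E = 1%E.
Proof.
have hle := total_le1.
have hge k : ((1 - e A k.+1 (q0 A))%:E <= \esum_(s in [set: run]) (Prob A s)%:E)%E.
  apply: esum_ge; exists [set` allruns k]; first by split; [exact: finite_seq|].
  rewrite -fsbig_seq ?uniq_allruns // sumEFin lee_fin.
  have := sum_allruns A k (q0 A); rewrite /Prob; lra.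
set S := esum _ _ in hle hge *.
have S0 : (0 <= S)%E by apply: esum_ge0 => s _; rewrite lee_fin Prob_ge0.
have finS : S \is a fin_num by rewrite ge0_fin_numE // (le_lt_trans hle) ?ltry.
rewrite -(fineK finS) in hle hge *; apply/eqP; rewrite eq_le hle /=.
rewrite lee_fin leNgt; apply/negP => hlt.
have heps : 0 < 1 - fine S by rewrite subr_gt0.
have [k hk] := e_small A heps.
have := hge k; rewrite lee_fin.
have := hk (q0 A); have := e_noninc A k (q0 A); lra.
Qed.

Lemma PrS_le1 (S : set run) : (\esum_(s in S) (Prob A s)%:E <= 1)%E.
Proof.
rewrite -total_prob (esumID S setT); last by move=> s _; rewrite lee_fin Prob_ge0.
by rewrite setTI; apply: leeDl; apply: esum_ge0 => s _; rewrite lee_fin Prob_ge0.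
Qed.

Lemma PrS_eq0 (S : set run) :
  \esum_(s in S) (Prob A s)%:E = 0%E <-> (forall s, S s -> ~ CRun A s).
Proof.
split => [h s Ss hc|h]; last by apply: esum1 => s Ss; rewrite Prob_zero //; exact: h.
have : ((Prob A s)%:E <= \esum_(s in S) (Prob A s)%:E)%E.
  apply: esum_ge; exists [set s]; first by split; [exact: finite_set1| move=> x ->].
  by rewrite fsbig_set1.
by rewrite h lee_fin leNgt Prob_pos.
Qed.

Lemma PrO (Obs : choiceType) (O : run -> Obs) (U : set Obs) :
  \esum_(o in U) PrObs A O o = \esum_(s in O @^-1` U) (Prob A s)%:E.
Proof.
rewrite /PrObs; under eq_esum do rewrite PrSE.
rewrite esum_esum; last by move=> *; rewrite lee_fin Prob_ge0.
rewrite -(esum_image (U `*`` fun o => [set s | O s = o]) snd (fun s => (Prob A s)%:E)).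
  congr esum; apply/seteqP; split.
    by move=> x [[o s] [/= Uo hs] /= <-]; rewrite /= hs.
  by move=> x /= Ux; exists (O x, x).
move=> [o1 s1] [o2 s2]; rewrite !inE /= => -[_ h1] [_ h2] e12.
by rewrite -h1 -h2 /= e12.
Qed.


End Core2.

Lemma ent_ge0 (R : realType) (p P : R) : 0 <= p -> p <= P -> 0 < P -> 0 <= ent_term p P.
Proof.
move=> p0 pP P0; rewrite /ent_term; case: eqP => // /eqP hp.
have pg : 0 < p by rewrite lt_def hp p0.
have l1 : ln (p / P) <= 0 by apply: ln_le0; rewrite ler_pdivrMr // mul1r.
have l2 : 0 < ln (2 : R) by apply: ln_gt0; lra.
rewrite oppr_ge0; apply: mulr_ge0_le0; first exact: p0.
by rewrite /log2 ler_pdivrMr // mul0r.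
Qed.

Lemma ent_eq0 (R : realType) (p P : R) : 0 <= p -> p <= P -> 0 < P ->
  ent_term p P = 0 <-> p = 0 \/ p = P.
Proof.
move=> p0 pP P0; rewrite /ent_term; case: eqP => [->|/eqP hp]; first by split => //; left.
have pg : 0 < p by rewrite lt_def hp p0.
have l2 : 0 < ln (2 : R) by apply: ln_gt0; lra.
have dg : 0 < p / P by rewrite divr_gt0.
split => [h|[/eqP|->]]; last 2 first.
- by rewrite (negPf hp).
- by rewrite divff ?gt_eqF // /log2 ln1 mul0r mulr0 oppr0.
right; move/eqP: h; rewrite oppr_eq0 mulf_eq0 (negPf hp) /= /log2 mulf_eq0 invr_eq0 (gt_eqF l2) orbF.
rewrite ln_eq0 // => /eqP h.
by rewrite -(divfK (lt0r_neq0 P0) p) h mul1r.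
Qed.

Lemma ent_pair (R : realType) (p q : R) : 0 <= p -> 0 <= q -> 0 < p + q ->
  0 <= ent_term p (p + q) + ent_term q (p + q) /\
  (ent_term p (p + q) + ent_term q (p + q) = 0 <-> p = 0 \/ q = 0).
Proof.
move=> p0 q0 pq.
have hp : p <= p + q by lra.
have hq : q <= p + q by lra.
have e1 := ent_ge0 p0 hp pq; have e2 := ent_ge0 q0 hq pq.
split; first exact: addr_ge0.
have [z1 z2] := (ent_eq0 p0 hp pq, ent_eq0 q0 hq pq).
split => [/eqP|h].
  rewrite paddr_eq0 // => /andP[/eqP/z1 h1 /eqP/z2 h2].
  case: h1 => h1; first by left.
  by right; lra.
have -> : ent_term p (p + q) = 0 by apply/z1; case: h => h; [left|right]; lra.
have -> : ent_term q (p + q) = 0 by apply/z2; case: h => h; [right|left]; lra.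
by rewrite addr0.
Qed.

Section Main.
Variables (R : realType) (Sigma Q : finType) (Obs : choiceType) (A : fpfa R Sigma Q).
Local Notation run := (run Sigma Q).

Lemma nfa_pathE q (s : run) : nfa_path (unProb A) q s = pos_path (Delta A) q s.
Proof. by elim: s q => [|[a r] s IH] q //=; rewrite IH. Qed.

Lemma accRunE : accRun (unProb A) = CRun A.
Proof. by rewrite /accRun /CRun; apply: funext => s /=; rewrite nfa_pathE. Qed.

Lemma esum_fin (S : set run) : \esum_(s in S) (Prob A s)%:E \is a fin_num.
Proof.
rewrite ge0_fin_numE; last by apply: esum_ge0 => *; rewrite lee_fin Prob_ge0.
by apply: le_lt_trans (PrS_le1 A S) _; rewrite ltry.
Qed.

Lemma fine_zero (E : \bar R) : E \is a fin_num -> (fine E = 0 <-> E = 0%E).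
Proof. by move=> fE; split => h; [rewrite -(fineK fE) h | rewrite h]. Qed.

Lemma joint_split (phi : set run) (O : run -> Obs) o :
  \esum_(s in [set s | O s = o]) (Prob A s)%:E =
  (\esum_(s in [set s | ind phi s = true /\ O s = o]) (Prob A s)%:E +
  \esum_(s in [set s | ind phi s = false /\ O s = o]) (Prob A s)%:E)%E.
Proof.
rewrite (esumID phi); last by move=> *; rewrite lee_fin Prob_ge0.
congr (_ + _)%E; congr esum; apply/seteqP; split => s /=.
- by move=> [ho hp]; split => //; apply/asboolP.
- by move=> [/asboolP hp ho].
- by move=> [ho hp]; split => //; apply/negbTE; apply/asboolPn.
- by move=> [hb ho]; split => //; apply/asboolPn; move: hb; rewrite /ind => ->.
Qed.

End Main.

Unset Implicit Arguments.

Theorem proposition1 (R : realType) (Sigma Q : finType) (Obs : choiceType)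
  (A : fpfa R Sigma Q) (phi : set (run Sigma Q)) (O : run Sigma Q -> Obs)
  (hphi : phi `<=` CRun A)
  (hO : forall o : Obs, exists s, CRun A s /\ O s = o) :
  [/\ ((0 <= POA A phi O)%E /\ (POA A phi O <= 1)%E
       /\ (0 <= POS A phi O)%E /\ (POS A phi O <= 1)%E),
      ((POA A phi O = 0%E <-> opaque (unProb A) phi (unProbObs O))
       /\ (POS A phi O = 0%E <-> sym_opaque (unProb A) phi (unProbObs O))) &
      ((POA A phi O = 1%E <-> phi = CRun A)
       /\ (POS A phi O = 1%E <-> condH A phi O = 0%E))].
Proof.
pose S psi := [set o | Defs.preim A O o `<=` psi].
have hPOA psi : POA A psi O = \esum_(s in O @^-1` S psi) (Prob A s)%:E by rewrite /POA PrO.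
have L0 U : \esum_(s in O @^-1` U) (Prob A s)%:E = 0%E <-> (forall o, ~ U o).
  rewrite PrS_eq0; split => h o.
  - move=> Uo; have [s [hs hso]] := hO o; apply: (h s) => //=; by rewrite hso.
  - move=> Us hs; exact: h (O o) Us.
have L1 U : \esum_(s in O @^-1` U) (Prob A s)%:E = 1%E <-> (forall o, U o).
  split => [h o|h]; last first.
    rewrite -(total_prob A); congr esum; apply/seteqP; split => s //= _; exact: h.
  have e1 := total_prob A.
  rewrite (esumID (O @^-1` U) setT) ?setTI in e1; last by move=> *; rewrite lee_fin Prob_ge0.
  rewrite h in e1.
  have hx : \esum_(s in ~` (O @^-1` U)) (Prob A s)%:E = 0%E.
    move: e1; set x := esum _ _ => e1.
    have fx : x \is a fin_num by exact: esum_fin.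
    rewrite -(fineK fx) in e1 *; move: e1; rewrite -EFinD => /eqP; rewrite eqe => /eqP e1.
    congr EFin; lra.
  have [s [hs hso]] := hO o.
  apply: contrapT => hno; apply: (proj1 (PrS_eq0 A _) hx s _ hs).
  by rewrite /= hso.
have dis o : S phi o -> S (complC A phi) o -> False.
  move=> h1 h2; have [s [hs hso]] := hO o.
  have hp : Defs.preim A O o s by split.
  by have [_] := h2 s hp; apply; apply: h1.
have hPOS : POS A phi O = \esum_(s in O @^-1` (S phi `|` S (complC A phi))) (Prob A s)%:E.
  rewrite /POS !hPOA (esumID (O @^-1` S phi) (O @^-1` (S phi `|` S (complC A phi)))); last first.
    by move=> *; rewrite lee_fin Prob_ge0.
  congr (_ + _)%E; congr esum; apply/seteqP; split => s /=.
  - by move=> h; split => //; left.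
  - by move=> [].
  - by move=> h; split; [right | move=> h1; exact: dis _ h1 h].
  - by move=> [[h|h] hn].
have g1 psi : (0 <= POA A psi O)%E.
  by rewrite hPOA; apply: esum_ge0 => *; rewrite lee_fin Prob_ge0.
split.
- split; first exact: g1.
  split; first by rewrite hPOA; exact: PrS_le1.
  split; first by rewrite /POS; apply: adde_ge0; exact: g1.
  by rewrite hPOS; exact: PrS_le1.
- split.
  + rewrite hPOA L0 /opaque accRunE.
    by split => h o; exact: h o.
  + rewrite hPOS L0 /sym_opaque /opaque accRunE.
    split => [h|[h1 h2] o [hs|hs]]; last 2 first.
    * exact: h1 o hs.
    * exact: h2 o hs.
    by split => o hsub; apply: (h o); [left|right]; exact: hsub.
- split.
  + rewrite hPOA L1; split => [h|->].
    * apply/seteqP; split => // s hs; exact: h (O s) s (conj hs erefl).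
    * by move=> o s [hs _].
  + rewrite hPOS L1.
    have key o : 0 <= \sum_(b : bool) ent_term (PrJoint A phi O b o) (fine (PrObs A O o)) /\
      (\sum_(b : bool) ent_term (PrJoint A phi O b o) (fine (PrObs A O o)) = 0 <->
       (S phi `|` S (complC A phi)) o).
      set Et := \esum_(s in [set s | ind phi s = true /\ O s = o]) (Prob A s)%:E.
      set Ef := \esum_(s in [set s | ind phi s = false /\ O s = o]) (Prob A s)%:E.
      have -> : \sum_(b : bool) ent_term (PrJoint A phi O b o) (fine (PrObs A O o)) =
          ent_term (fine Et) (fine Et + fine Ef) + ent_term (fine Ef) (fine Et + fine Ef).
        by rewrite big_bool /PrJoint /PrObs !PrSE (joint_split A phi) fineD ?esum_fin.
      have ht : fine Et = 0 <-> S (complC A phi) o.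
        rewrite fine_zero ?esum_fin // PrS_eq0; split.
        - move=> h s [hs hso]; split => // hp; apply: (h s) => //; split => //; exact/asboolP.
        - move=> h s [/asboolP hp hso] hs; have [_] := h s (conj hs hso); exact.
      have hf : fine Ef = 0 <-> S phi o.
        rewrite fine_zero ?esum_fin // PrS_eq0; split.
        - move=> h s [hs hso]; apply: contrapT => hnp; apply: (h s) => //; split => //.
          by apply/negbTE; apply/asboolPn.
        - move=> h s [hb hso] hs; have hp := h s (conj hs hso); move: hb; rewrite /ind.
          by move/negbT/asboolPn.
      have t0 : 0 <= fine Et by apply: fine_ge0; apply: esum_ge0 => *; rewrite lee_fin Prob_ge0.
      have f0 : 0 <= fine Ef by apply: fine_ge0; apply: esum_ge0 => *; rewrite lee_fin Prob_ge0.
      have pos : 0 < fine Et + fine Ef.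
        rewrite ltNge; apply/negP => hle.
        have z1 : fine Et = 0 by lra.
        have z2 : fine Ef = 0 by lra.
        exact: dis o (proj1 hf z2) (proj1 ht z1).
      have [k0 k1] := ent_pair t0 f0 pos.
      split => //; rewrite k1.
      split => [[/ht h|/hf h]|[h|h]].
      * by right.
      * by left.
      * by right; apply/hf.
      * by left; apply/ht.
    split => [hall|hz].
    * by apply: esum1 => o _; rewrite (proj2 (proj2 (key o)) (hall o)).
    * move=> o; have [k0 k1] := key o; apply/k1.
      have : ((\sum_(b : bool) ent_term (PrJoint A phi O b o) (fine (PrObs A O o)))%:E <= condH A phi O)%E.
        apply: esum_ge; exists [set o]; first by split; [exact: finite_set1|].
        by rewrite fsbig_set1.
      by rewrite hz lee_fin => hle; apply/eqP; rewrite eq_le hle k0.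
Qed.
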